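(* Let $d\ge 2$. Identifying $P(\mathbb{Z}^d)$ with its image under the diagonal embedding into $\mathbb{Z}_S^d$, we have $P(\mathbb{Z}_S^d)=\mathbb{Z}_S^\times\cdot P(\mathbb{Z}^d)$.
   Context: $S=\{\infty,p_1,\dots,p_s\}$ with $p_i$ distinct primes, $\mathbb{Z}_S=\mathbb{Z}[p_1^{-1},\dots,p_s^{-1}]$, $\mathbb{Z}_S^\times=\{\pm p_1^{k_1}\cdots p_s^{k_s}:k_i\in\mathbb{Z}\}$. $P(\mathbb{Z}_S^d)=\mathrm{SL}_d(\mathbb{Z}_S)\cdot\mathbf e_1$ and $P(\mathbb{Z}^d)=\mathrm{SL}_d(\mathbb{Z})\cdot\mathbf e_1$ (the integer vectors with coprime coordinates). *)

(* Defs.v *)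
From HB Require Import structures.
From mathcomp Require Import all_boot all_order all_algebra.
Set Implicit Arguments. Unset Strict Implicit. Unset Printing Implicit Defensive.
Import Order.TTheory GRing.Theory Num.Theory.
Local Open Scope ring_scope.

(* S = {oo, p_1, ..., p_s} is encoded by the list ps = [:: p_1; ...; p_s]
   of distinct primes.  Z_S = Z[1/p_1,...,1/p_s] is realised inside rat. *)

Definition inZS (ps : seq nat) (q : rat) : bool :=
  all (fun p => p \in ps) (primes `|denq q|%N).

Definition unitZS (ps : seq nat) (u : rat) : Prop :=
  exists (b : bool) (k : 'I_(size ps) -> int),
    u = (-1) ^+ b * \prod_(i < size ps) ((nth 0%N ps i)%:R : rat) ^ (k i).

Definition e1 (R : nzRingType) (d : nat) : 'cV[R]_d :=
  \col_(i < d) (if nat_of_ord i == 0%N then 1 else 0).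

Definition SL_ZS (ps : seq nat) (d : nat) (M : 'M[rat]_d) : Prop :=
  (forall i j, inZS ps (M i j)) /\ \det M = 1.

Definition P_ZS (ps : seq nat) (d : nat) (v : 'cV[rat]_d) : Prop :=
  exists M : 'M[rat]_d, SL_ZS ps M /\ v = M *m e1 rat d.

Definition P_Z (d : nat) (w : 'cV[int]_d) : Prop :=
  exists A : 'M[int]_d, \det A = 1 /\ w = A *m e1 int d.

Definition embZ (d : nat) (w : 'cV[int]_d) : 'cV[rat]_d := map_mx intr w.

(* Main.v *)
Require Import Defs.
From HB Require Import structures.
From mathcomp Require Import all_boot all_order all_algebra.
Import Order.TTheory GRing.Theory Num.Theory.
Local Open Scope ring_scope.

Module Helpers.
Set Implicit Arguments. Unset Strict Implicit.

Definition smooth (ps : seq nat) (n : nat) : bool :=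
  (0 < n)%N && all (fun p => p \in ps) (primes n).

Lemma smoothM ps m n : smooth ps m -> smooth ps n -> smooth ps (m * n)%N.
Proof.
move=> /andP[m0 /allP hm] /andP[n0 /allP hn]; apply/andP; split; first by rewrite muln_gt0 m0.
apply/allP=> p; rewrite primesM // => /orP[] ?; [exact: hm|exact: hn].
Qed.

Lemma smooth1 ps : smooth ps 1.
Proof. by []. Qed.

Lemma smoothX ps m k : smooth ps m -> smooth ps (m ^ k)%N.
Proof.
elim: k => [|k IH] hm; first by []. by rewrite expnS smoothM // IH.
Qed.

Lemma smooth_dvd ps m n : (m %| n)%N -> smooth ps n -> smooth ps m.
Proof.
move=> hmn /andP[n0 /allP hn]; have m0 : (0 < m)%N by exact: dvdn_gt0 hmn.
apply/andP; split=> //; apply/allP=> p; rewrite mem_primes => /and3P[pp _ pm].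
apply: hn; rewrite mem_primes pp n0; exact: dvdn_trans pm hmn.
Qed.

Lemma smooth_prod ps (I : finType) (F : I -> nat) :
  (forall i, smooth ps (F i)) -> smooth ps (\prod_i F i).
Proof.
move=> h; apply: (big_ind (smooth ps)) => //; exact: smoothM.
Qed.

Lemma inZS_smooth ps q : inZS ps q = smooth ps `|denq q|.
Proof.
by rewrite /smooth /inZS absz_gt0 (gt_eqF (denq_gt0 q)).
Qed.

Lemma inZS_int ps q (m : nat) : smooth ps m -> q * m%:R \is a Num.int -> inZS ps q.
Proof.
move=> hm hq; rewrite inZS_smooth; apply: smooth_dvd hm.
move/intrP: hq => [z hz].
have e : numq q * (m%:Z) = z * denq q.
  apply: (intr_inj (R:=rat)).
rewrite !intrM numqE -hz -[(Posz m)%:~R]/(m%:R). by rewrite mulrAC.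
have hdv : (denq q %| numq q * m%:Z)%Z by apply/dvdzP; exists z.
move: hdv; rewrite unfold_in /= abszM absz_nat Gauss_dvdr //.
by rewrite coprime_sym coprime_num_den.
Qed.

Lemma prod_pow_gt0 (s : seq nat) (e : nat -> nat) :
  all prime s -> (0 < \prod_(p <- s) p ^ e p)%N.
Proof.
elim: s => [|p s IH] /=; first by rewrite big_nil.
move=> /andP[pp hs]; rewrite big_cons muln_gt0 expn_gt0 prime_gt0 //=; exact: IH.
Qed.

Lemma logn_prod_seq (s : seq nat) (e : nat -> nat) q :
  all prime s -> uniq s ->
  logn q (\prod_(p <- s) p ^ e p) = if q \in s then e q else 0%N.
Proof.
elim: s => [|p s IH] /=; first by rewrite big_nil logn1.
move=> /andP[pp hs] /andP[nps us]; rewrite big_cons lognM; last exact: prod_pow_gt0.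
  2: by rewrite expn_gt0 prime_gt0.
rewrite lognX logn_prime // IH // in_cons.
have [->|nqp] := eqVneq q p; first by rewrite (negbTE nps) muln1 addn0.
by rewrite muln0.
Qed.

Lemma smooth_nat_prod (ps : seq nat) (n : nat) :
  all prime ps -> uniq ps -> smooth ps n ->
  n = (\prod_(p <- ps) p ^ logn p n)%N.
Proof.
move=> hp hu /andP[n0 /allP hn]; apply: eqn_from_log => //; first exact: prod_pow_gt0.
move=> q; rewrite logn_prod_seq //; case: ifP => // qn.
apply/eqP; apply: contraFT qn; rewrite -lt0n logn_gt0; exact: hn.
Qed.

Lemma smooth_rat_prod (ps : seq nat) (n : nat) :
  all prime ps -> uniq ps -> smooth ps n ->
  (n%:R : rat) = \prod_(i < size ps) ((nth 0%N ps i)%:R : rat) ^ ((logn (nth 0%N ps i) n : nat) : int).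
Proof.
move=> hp hu hn; rewrite {1}(@smooth_nat_prod ps n hp hu hn) natr_prod (big_nth 0%N) big_mkord.
by apply: eq_bigr => i _; rewrite natrX exprnP.
Qed.

Lemma nth_ps_neq0 (ps : seq nat) (i : 'I_(size ps)) :
  all prime ps -> ((nth 0%N ps i)%:R : rat) != 0.
Proof.
move=> hp; rewrite pnatr_eq0 -lt0n prime_gt0 //; apply: (allP hp); exact: mem_nth.
Qed.

Lemma unitZS_frac (ps : seq nat) (c : int) (m : nat) :
  all prime ps -> uniq ps -> smooth ps `|c|%N -> smooth ps m ->
  unitZS ps (c%:~R / m%:R).
Proof.
move=> hp hu hc hm.
exists ((c%:~R : rat) < 0).
exists (fun i => (logn (nth 0%N ps i) `|c|%N)%:Z - (logn (nth 0%N ps i) m)%:Z).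
rewrite {1}[c%:~R : rat]numEsign -intr_norm -natr_absz -mulrA; congr (_ * _).
rewrite (smooth_rat_prod hp hu hc) (smooth_rat_prod hp hu hm) -prodfV -big_split /=.
apply: eq_bigr => i _; rewrite expfzDr ?nth_ps_neq0 // invr_expz //.
Qed.

Lemma unitZS_inv (ps : seq nat) u : unitZS ps u -> unitZS ps u^-1.
Proof.
move=> [b [k ->]]; exists b; exists (fun i => - k i).
rewrite invfM -prodfV; congr (_ * _); last by apply: eq_bigr => i _; rewrite invr_expz.
by case: b; rewrite /= ?invr1 ?expr1 ?invrN1.
Qed.

Lemma unitZS1 (ps : seq nat) : unitZS ps 1.
Proof.
exists false; exists (fun _ => 0); rewrite expr0 mul1r big1 // => i _; exact: expr0z.
Qed.

Lemma inZS_mul_unit (ps : seq nat) (z : int) u :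
  all prime ps -> unitZS ps u -> inZS ps (z%:~R * u).
Proof.
move=> hp [b [k ->]].
apply: (@inZS_int ps _ (\prod_(i < size ps) (nth 0%N ps i) ^ `|k i|)%N).
  apply: smooth_prod => i; apply: smoothX.
  have pi : prime (nth 0%N ps i) by apply: (allP hp); exact: mem_nth.
  apply/andP; split; first exact: prime_gt0.
  by rewrite primes_prime //= andbT mem_nth.
rewrite natr_prod -!mulrA; apply: rpredM; first exact: rpred_int.
apply: rpredM; first by apply: rpredX; case: b; rewrite ?rpredN1.
rewrite -big_split /=; apply: rpred_prod => i _.
rewrite natrX exprnP -expfzDr ?nth_ps_neq0 //.
case: (k i) => n /=.
  by rewrite -PoszD -exprnP rpredX ?rpred_nat.
by rewrite NegzE addNr expr0z rpred1.
Qed.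

Lemma mul_e1 (R : nzRingType) m n (A : 'M[R]_(m, n.+1)) i (j : 'I_1) :
  (A *m e1 R n.+1) i j = A i ord0.
Proof.
rewrite mxE (bigD1 ord0) //= big1 => [|k hk]; first by rewrite mxE /= mulr1 addr0.
rewrite mxE; case: ifP => [/eqP hk0|_]; last by rewrite mulr0.
by case/eqP: hk; apply/val_inj.
Qed.

Lemma map_e1 n : map_mx (intr : int -> rat) (e1 int n) = e1 rat n.
Proof. by apply/matrixP => i j; rewrite !mxE; case: ifP. Qed.

Lemma unitZS_neq0 ps u : all prime ps -> unitZS ps u -> u != 0.
Proof.
move=> hp [b [k ->]]; rewrite mulf_neq0 ?signr_eq0 //.
rewrite prodf_seq_neq0; apply/allP => i _ /=; rewrite expfz_neq0 //; exact: nth_ps_neq0.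
Qed.

Lemma backward ps (hprime : all prime ps) n (v : 'cV[rat]_n.+2) u w :
  unitZS ps u -> P_Z w -> v = u *: embZ w -> P_ZS ps v.
Proof.
move=> hu [A [hA hw]] hv.
pose dg : 'rV[rat]_n.+2 :=
  \row_j (if (j : nat) == 0%N then u else if (j : nat) == 1%N then u^-1 else 1).
exists (map_mx intr A *m diag_mx dg); split; first split.
- move=> i j; rewrite mul_mx_diag !mxE; apply: inZS_mul_unit => //.
  case: ifP => _; first exact: hu.
  case: ifP => _; [exact: unitZS_inv | exact: unitZS1].
- rewrite det_mulmx det_map_mx hA rmorph1 mul1r det_diag !big_ord_recl big1 => [|i _].
    by rewrite !mxE /= mulr1 mulfV // (unitZS_neq0 hprime hu).
  by rewrite !mxE.
- rewrite hv hw /embZ map_mxM map_e1 -mulmxA.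
  rewrite scalemxAr; congr (_ *m _).
  apply/matrixP => i j; rewrite mul_diag_mx !mxE.
  by case: ifP => _; rewrite ?mulr1 ?mulr0 //; case: ifP.
Qed.

Lemma forward ps (hprime : all prime ps) (huniq : uniq ps) n (v : 'cV[rat]_n.+2) :
  P_ZS ps v -> exists (u : rat) (w : 'cV[int]_n.+2), unitZS ps u /\ P_Z w /\ v = u *: embZ w.
Proof.
move=> [M [[hMe hMd] hv]].
pose m := (\prod_(k : 'I_n.+2 * 'I_n.+2) `|denq (M k.1 k.2)|)%N.
have hm : smooth ps m by apply: smooth_prod => k; rewrite -inZS_smooth.
have m0 : (0 < m)%N by case/andP: hm.
have hdiv i j : (`|denq (M i j)| %| m)%N.
  by rewrite /m (bigD1 (i, j)) //= dvdn_mulr.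
pose N : 'M[int]_n.+2 := \matrix_(i, j) (numq (M i j) * (m %/ `|denq (M i j)|)%N%:Z).
have hN : map_mx intr N = m%:R *: M.
  apply/matrixP => i j; rewrite !mxE intrM numqE -mulrA mulrC; congr (_ * _).
  rewrite -intrM.
  have -> : denq (M i j) = (`|denq (M i j)|%N)%:Z by rewrite absz_denq.
  by rewrite -PoszM mulnC divnK ?hdiv.
have hdetN : \det N = (m ^ n.+2)%N%:Z.
  apply: (intr_inj (R:=rat)).
  have -> : (\det N)%:~R = \det (map_mx (intr : int -> rat) N) by rewrite det_map_mx.
  rewrite hN detZ hMd mulr1.
  by rewrite -[((m ^ _)%N%:Z)%:~R]/((m ^ _)%:R) natrX.
have [L uL [R uR [s _ hS]]] := int_Smith_normal_form (N *m e1 int n.+2).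
set c := s`_0 * R ord0 ord0.
have hx : N *m e1 int n.+2 = c *: (L *m e1 int n.+2).
  rewrite hS -mulmxA scalemxAr; congr (_ *m _).
  apply/matrixP => i j; rewrite (ord1 j) !mxE big_ord1 !mxE /=.
  case: (nat_of_ord i =P 0%N) => [->|_]; first by rewrite mulr1n mulr1.
  by rewrite mulr0n mul0r mulr0.
have hc : (c %| \det N)%Z.
  rewrite (expand_det_col N ord0); apply: rpred_sum => i _; apply: dvdz_mulr.
  have := congr1 (fun X : 'cV[int]_n.+2 => X i ord0) hx => /=.
  rewrite mul_e1 => ->; rewrite mxE; exact: dvdz_mulr (dvdzz c).
have hcs : smooth ps `|c|%N.
  apply: smooth_dvd (smoothX n.+2 hm); move: hc; rewrite hdetN unfold_in /=.
  by [].
have dL : (\det L == 1) || (\det L == -1) by move: uL; rewrite unitmxE.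
pose L' := L *m diag_mx (\row_j (if (j : nat) == 1%N then \det L else 1)).
exists (c%:~R / m%:R), (L *m e1 int n.+2); split; first exact: unitZS_frac.
split.
  exists L'; split.
    rewrite det_mulmx det_diag !big_ord_recl big1 => [|i _]; last by rewrite mxE.
    by rewrite !mxE /= mulr1 mul1r; case/orP: dL => /eqP ->.
  rewrite -mulmxA; congr (_ *m _); apply/matrixP => i j; rewrite mul_diag_mx !mxE.
  by case: (nat_of_ord i =P 0%N) => [->|_]; rewrite ?mulr0 ?mulr1.
have m0' : (m%:R : rat) != 0 by rewrite pnatr_eq0 -lt0n.
have e : m%:R *: v = c%:~R *: embZ (L *m e1 int n.+2).
  have := congr1 (map_mx (intr : int -> rat)) hx.
  rewrite map_mxM hN map_e1 map_mxZ /= -scalemxAl -hv => ->; by [].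
by rewrite mulrC -scalerA -e scalerA mulVf // scale1r.
Qed.
End Helpers.
Import Helpers.

Theorem proposition2p4 (ps : seq nat) (hprime : all prime ps) (huniq : uniq ps)
    (d : nat) (hd : (2 <= d)%N) (v : 'cV[rat]_d) :
  P_ZS ps v <->
  exists (u : rat) (w : 'cV[int]_d), unitZS ps u /\ P_Z w /\ v = u *: embZ w.
Proof.
case: d hd v => [|[|n]] // _ v; split.
  exact: forward.
move=> [u [w [hu [hw hv]]]]; exact: backward hu hw hv.
Qed.
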